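(* Let $X$ be a Hausdorff space and $\mu:X^k\to X$ a continuous $k$-mean that is $\beta$-stable and admits a $\beta$-extension $\tilde\mu$. Then $\tilde\mu$ is a stable extension of $\mu$.
   Context: A $k$-mean is a map $\mu:X^k\to X$ with $\mu(x,\ldots,x)=x$. Barycentric operator $\beta:X^{k+1}\to X^{k+1}$, $\beta(\mathbf{x})_j=\mu(\pi_{\neq j}\mathbf{x})$ with $\pi_{\neq j}(x_1,\ldots,x_{k+1})=(x_1,\ldots,x_{j-1},x_{j+1},\ldots,x_{k+1})$. A $(k+1)$-mean $\tilde\mu$ is a $\beta$-extension of $\mu$ if $\beta^n(\mathbf{x})\to(\tilde\mu(\mathbf{x}),\ldots,\tilde\mu(\mathbf{x}))$ for every $\mathbf{x}$. $\mu$ is $\beta$-stable if for all $\mathbf{x}\in X^{k+1}$: $\pi_{k+1}(\mathbf{x})=\mu(\pi_{\neq k+1}\mathbf{x})$ implies $\pi_{k+1}(\beta(\mathbf{x}))=\mu(\pi_{\neq k+1}(\beta(\mathbf{x})))$, where $\pi_{k+1}$ is the last coordinate. A $(k+1)$-mean $\nu$ is a stable extension of $\mu$ if $\nu(x_1,\ldots,x_k,\mu(x_1,\ldots,x_k))=\mu(x_1,\ldots,x_k)$ for all $x_1,\ldots,x_k\in X$. *)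

(* Defs.v *)
From HB Require Import structures.
From mathcomp Require Import all_boot all_order all_algebra.
From mathcomp Require Import all_classical all_reals all_analysis.
Set Implicit Arguments. Unset Strict Implicit. Unset Printing Implicit Defensive.
Local Open Scope classical_set_scope.

(* X^k with the product topology; coordinates indexed by 'I_k = {0,...,k-1}
   (paper's coordinate j+1 is index j here). *)
Notation tup X k := {ptws 'I_k -> X}.

Definition is_mean (X : Type) (k : nat) (mu : ('I_k -> X) -> X) :=
  forall x : X, mu (fun _ => x) = x.

Definition pi_neq (X : Type) (k : nat) (j : 'I_k.+1) (x : 'I_k.+1 -> X) : 'I_k -> X :=
  fun i => x (lift j i).

Definition beta (X : Type) (k : nat) (mu : ('I_k -> X) -> X)
  (x : 'I_k.+1 -> X) : 'I_k.+1 -> X :=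
  fun j => mu (pi_neq j x).

Definition beta_extension (X : topologicalType) (k : nat)
  (mu : ('I_k -> X) -> X) (nu : ('I_k.+1 -> X) -> X) :=
  is_mean nu /\
  forall x : 'I_k.+1 -> X,
    (fun n : nat => (iter n (beta mu) x : tup X k.+1)) @ \oo -->
      ((fun _ : 'I_k.+1 => nu x) : tup X k.+1).

(* beta-stability (pi_{k+1} = last coordinate = ord_max) *)
Definition beta_stable (X : Type) (k : nat) (mu : ('I_k -> X) -> X) :=
  forall x : 'I_k.+1 -> X,
    x ord_max = mu (pi_neq ord_max x) ->
    beta mu x ord_max = mu (pi_neq ord_max (beta mu x)).

Definition snoc (X : Type) (k : nat) (x : 'I_k -> X) (y : X) : 'I_k.+1 -> X :=
  fun i => if unlift ord_max i is Some i' then x i' else y.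

Definition stable_extension (X : Type) (k : nat)
  (mu : ('I_k -> X) -> X) (nu : ('I_k.+1 -> X) -> X) :=
  is_mean nu /\ forall x : 'I_k -> X, nu (snoc x (mu x)) = mu x.

(* Main.v *)
Require Import Defs.
From HB Require Import structures.
From mathcomp Require Import all_boot all_order all_algebra.
From mathcomp Require Import all_classical all_reals all_analysis.
Local Open Scope classical_set_scope.

Theorem proposition8p2 (X : topologicalType) (k : nat)
  (mu : ('I_k -> X) -> X) (nu : ('I_k.+1 -> X) -> X) :
  hausdorff_space X ->
  is_mean mu ->
  continuous (mu : tup X k -> X) ->
  beta_stable mu ->
  beta_extension mu nu ->
  stable_extension mu nu.
Proof.
move=> hX _ _ hst [hnu hcv]; split => // x.
set y := snoc x (mu x).
have hpi : pi_neq ord_max y = x.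
  apply: funext => i; rewrite /pi_neq /y /snoc liftK //.
have inv : forall n, iter n (beta mu) y ord_max = mu (pi_neq ord_max (iter n (beta mu) y))
     /\ iter n (beta mu) y ord_max = mu x.
  elim=> [|n [IH1 IH2]] /=.
    rewrite hpi; split => //; rewrite /y /snoc unlift_none //.
  split; first exact: hst.
  by rewrite -IH2 IH1.
have := cvg_comp _ _ (hcv y) (@proj_continuous _ (fun=> X) ord_max _).
rewrite /proj /=.
have -> : (fun g : 'I_k.+1 -> X => g ord_max) \o (fun n => iter n (beta mu) y) = fun=> mu x.
  by apply: funext => n /=; rewrite (inv n).2.
move=> h; apply: (@cvg_unique _ hX ((fun _ : nat => mu x) @ \oo) _ _ _ h); exact: cvg_cst.
Qed.
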